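(* Suppose A1–A3 and A4' hold and let $\{x_k\}$ be generated by Algorithm 1. Let $k_1=n_0(\kappa_c/2)$, where for $\delta>0$, $n_0(\delta)=\min\{n\in\mathbb{N}:\ \nu_k\le\delta\|\nabla f(x_k)\|^2\ \text{for all } k\ge n\}$ (well defined by A4'). Then for every $\epsilon>0$ the set $\Omega_\epsilon=\{k\in\mathbb{N}:\ \|\nabla f(x_k)\|>\epsilon\}$ is finite and $$|\Omega_\epsilon|\le k_1+\left[\frac{2\left(f(x_0)-f_{low}+\sum_{i=0}^{k_1-1}\nu_i\right)}{\kappa_c}\right]\epsilon^{-2}.$$
   Context: Let $(X,\langle\cdot,\cdot\rangle)$ be a real Hilbert space with induced norm $\|\cdot\|$, and $f:X\to\mathbb{R}$ Fréchet differentiable with gradient $\nabla f$. Algorithm 1 (general non-monotone descent algorithm): parameters $x_0\in X$, $\alpha_0>0$, $\beta,\rho\in(0,1)$. For $k=0,1,2,\dots$: choose $d_k\in X$ with $\langle\nabla f(x_k),d_k\rangle<0$; then for $l=0,1,2,\dots$ choose a number $\nu_{k,l}\ge 0$ and test $$f(x_k+\alpha_k\beta^l d_k)\le f(x_k)+\rho\alpha_k\beta^l\langle\nabla f(x_k),d_k\rangle+\nu_{k,l};$$ let $l_k$ be the first $l$ for which this holds, set $\nu_k:=\nu_{k,l_k}$, $x_{k+1}=x_k+\alpha_k\beta^{l_k}d_k$ and $\alpha_{k+1}=\alpha_k\beta^{l_k-1}$. It is assumed the algorithm generates infinite sequences (all $l_k$ finite). Assumptions: A1: $\nabla f$ is Lipschitz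 continuous with constant $L>0$. A2: there is $f_{low}\in\mathbb{R}$ with $f(x)\ge f_{low}$ for all $x\in X$. A3: there are constants $c_1,c_2>0$ with $\langle\nabla f(x_k),d_k\rangle\le -c_1\|\nabla f(x_k)\|^2$ and $\|d_k\|\le c_2\|\nabla f(x_k)\|$ for all $k$. A4': $\nu_k=o(\|\nabla f(x_k)\|^2)$, i.e. for every $\delta>0$ there is $n\in\mathbb{N}$ with $\nu_k\le\delta\|\nabla f(x_k)\|^2$ for all $k\ge n$. Constant: $\kappa_c=\min\left\{\rho\beta\alpha_0c_1,\ \frac{2\beta\rho(1-\rho)c_1^2}{Lc_2^2}\right\}$. *)

(* Defs.v *)
From Stdlib Require Import Reals Lra Lia List.
Open Scope R_scope.

Record RealHilbert := {
  hcar :> Type;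
  hadd : hcar -> hcar -> hcar;
  hopp : hcar -> hcar;
  hzero : hcar;
  hscal : R -> hcar -> hcar;
  hinner : hcar -> hcar -> R;
  hadd_assoc : forall x y z, hadd x (hadd y z) = hadd (hadd x y) z;
  hadd_comm : forall x y, hadd x y = hadd y x;
  hadd_0 : forall x, hadd x hzero = x;
  hadd_opp : forall x, hadd x (hopp x) = hzero;
  hscal_assoc : forall a b x, hscal a (hscal b x) = hscal (a * b) x;
  hscal_1 : forall x, hscal 1 x = x;
  hscal_distr_l : forall a x y, hscal a (hadd x y) = hadd (hscal a x) (hscal a y);
  hscal_distr_r : forall a b x, hscal (a + b) x = hadd (hscal a x) (hscal b x);
  hinner_sym : forall x y, hinner x y = hinner y x;
  hinner_add_l : forall x y z, hinner (hadd x y) z = hinner x z + hinner y z;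
  hinner_scal_l : forall a x y, hinner (hscal a x) y = a * hinner x y;
  hinner_pos : forall x, 0 <= hinner x x;
  hinner_def : forall x, hinner x x = 0 -> x = hzero;
  hcomplete : forall u : nat -> hcar,
    (forall eps, eps > 0 -> exists N, forall m n, (m >= N)%nat -> (n >= N)%nat ->
        sqrt (hinner (hadd (u m) (hopp (u n))) (hadd (u m) (hopp (u n)))) < eps) ->
    exists l, forall eps, eps > 0 -> exists N, forall n, (n >= N)%nat ->
        sqrt (hinner (hadd (u n) (hopp l)) (hadd (u n) (hopp l))) < eps
}.

Arguments hadd {_}. Arguments hopp {_}. Arguments hzero {_}.
Arguments hscal {_}. Arguments hinner {_}.

Definition hnorm {X : RealHilbert} (x : X) : R := sqrt (hinner x x).
Definition hsub {X : RealHilbert} (x y : X) : X := hadd x (hopp y).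

Definition frechet_grad {X : RealHilbert} (f : X -> R) (g : X -> X) : Prop :=
  forall x eps, eps > 0 -> exists delta, delta > 0 /\
    forall h : X, 0 < hnorm h < delta ->
      Rabs (f (hadd x h) - f x - hinner (g x) h) <= eps * hnorm h.

Fixpoint sum_lt (u : nat -> R) (n : nat) : R :=
  match n with
  | O => 0
  | S m => sum_lt u m + u m
  end.

Definition nm_test {X : RealHilbert} (f : X -> R) (g : X -> X) (rho beta : R)
  (xk dk : X) (ak : R) (nukl : R) (l : nat) : Prop :=
  f (hadd xk (hscal (ak * beta ^ l) dk))
    <= f xk + rho * ak * beta ^ l * hinner (g xk) dk + nukl.

Definition algorithm1 {X : RealHilbert} (f : X -> R) (g : X -> X)
  (alpha0 beta rho : R) (x : nat -> X) (alpha : nat -> R) (d : nat -> X)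
  (nu : nat -> nat -> R) (lk : nat -> nat) : Prop :=
  alpha0 > 0 /\ 0 < beta < 1 /\ 0 < rho < 1 /\
  alpha 0%nat = alpha0 /\
  (forall k, hinner (g (x k)) (d k) < 0) /\
  (forall k l, 0 <= nu k l) /\
  (forall k, nm_test f g rho beta (x k) (d k) (alpha k) (nu k (lk k)) (lk k)) /\
  (forall k l, (l < lk k)%nat ->
      ~ nm_test f g rho beta (x k) (d k) (alpha k) (nu k l) l) /\
  (forall k, x (S k) = hadd (x k) (hscal (alpha k * beta ^ (lk k)) (d k))) /\
  (forall k, alpha (S k) = alpha k * powerRZ beta (Z.of_nat (lk k) - 1)).

Definition kappa_c (rho beta alpha0 c1 c2 L : R) : R :=
  Rmin (rho * beta * alpha0 * c1) (2 * beta * rho * (1 - rho) * c1 ^ 2 / (L * c2 ^ 2)).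

(* Main.v *)
Require Import Defs.
From Stdlib Require Import Reals Lra Lia List Classical.
Open Scope R_scope.

Section H.
Variable X : RealHilbert.

Lemma hadd_0l (x : X) : hadd hzero x = x.
Proof. rewrite hadd_comm; apply hadd_0. Qed.

Lemma hscal0 (x : X) : hscal 0 x = hzero.
Proof.
  assert (E : hscal 0 x = hadd (hscal 0 x) (hscal 0 x)).
  { rewrite <- hscal_distr_r. f_equal; ring. }
  rewrite <- (hadd_opp _ (hscal 0 x)).
  rewrite E at 2. rewrite <- hadd_assoc, hadd_opp, hadd_0. reflexivity.
Qed.

Lemma hinner_zero_l (y : X) : hinner hzero y = 0.
Proof. rewrite <- (hscal0 hzero), hinner_scal_l. ring. Qed.

Lemma hinner_zero_r (y : X) : hinner y hzero = 0.
Proof. rewrite hinner_sym; apply hinner_zero_l. Qed.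

Lemma hinner_scal_r a (x y : X) : hinner x (hscal a y) = a * hinner x y.
Proof. rewrite hinner_sym, hinner_scal_l, hinner_sym; reflexivity. Qed.

Lemma hinner_add_r (x y z : X) : hinner z (hadd x y) = hinner z x + hinner z y.
Proof. rewrite hinner_sym, hinner_add_l, !(hinner_sym _ z). reflexivity. Qed.

Lemma hopp_scal (x : X) : hopp x = hscal (-1) x.
Proof.
  assert (E : hadd (hscal (-1) x) x = hzero).
  { rewrite <- (hscal_1 _ x) at 2. rewrite <- hscal_distr_r.
    replace (-1 + 1) with 0 by ring. apply hscal0. }
  rewrite <- (hadd_0 _ (hopp x)), <- E, hadd_assoc.
  rewrite (hadd_comm _ (hopp x) (hscal (-1) x)).
  rewrite <- hadd_assoc.
  rewrite (hadd_comm _ (hopp x) x), hadd_opp, hadd_0. reflexivity.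
Qed.

Lemma hinner_opp_l (x y : X) : hinner (hopp x) y = - hinner x y.
Proof. rewrite hopp_scal, hinner_scal_l. ring. Qed.

Lemma hnorm_nonneg (x : X) : 0 <= hnorm x.
Proof. apply sqrt_pos. Qed.

Lemma hnorm_sq (x : X) : hnorm x ^ 2 = hinner x x.
Proof. unfold hnorm. simpl. rewrite Rmult_1_r. apply sqrt_sqrt, hinner_pos. Qed.

Lemma hnorm_zero (x : X) : hnorm x = 0 -> x = hzero.
Proof. intro H. apply hinner_def. rewrite <- hnorm_sq, H. ring. Qed.

Lemma hnorm_scal t (h : X) : hnorm (hscal t h) = Rabs t * hnorm h.
Proof.
  unfold hnorm. rewrite hinner_scal_l, hinner_scal_r, <- Rmult_assoc.
  rewrite sqrt_mult_alt. rewrite <- sqrt_Rsqr_abs. reflexivity.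
  apply Rle_0_sqr.
Qed.

Lemma CS (u v : X) : hinner u v <= hnorm u * hnorm v.
Proof.
  destruct (Req_dec (hinner v v) 0) as [H0|H0].
  - apply hinner_def in H0. subst. rewrite hinner_zero_r.
    apply Rmult_le_pos; apply hnorm_nonneg.
  - set (a := hinner v v). set (b := - hinner u v).
    assert (Ha : 0 < a) by (pose proof (hinner_pos _ v); unfold a in *; lra).
    pose proof (hinner_pos _ (hadd (hscal a u) (hscal b v))) as P.
    rewrite !hinner_add_l, !hinner_add_r, !hinner_scal_l, !hinner_scal_r in P.
    rewrite (hinner_sym _ v u) in P. fold a in P.
    assert (Q : hinner u v ^ 2 <= hinner u u * a).
    { assert (R0 : 0 <= a * (hinner u u * a - hinner u v ^ 2)).
      { unfold b in P. replace (a * (hinner u u * a - hinner u v ^ 2)) with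
          (a * (a * hinner u u) + a * (- hinner u v * hinner u v) +
  (- hinner u v * (a * hinner u v) + - hinner u v * (- hinner u v * a))) by ring. exact P. }
      assert (0 <= hinner u u * a - hinner u v ^ 2).
      { apply (Rmult_le_reg_l a); lra. } lra. }
    assert (Q2 : hinner u v ^ 2 <= (hnorm u * hnorm v) ^ 2).
    { rewrite Rpow_mult_distr, !hnorm_sq. exact Q. }
    pose proof (hnorm_nonneg u). pose proof (hnorm_nonneg v).
    assert (Hp : 0 <= hnorm u * hnorm v) by (apply Rmult_le_pos; assumption).
    revert Q2 Hp. generalize (hnorm u * hnorm v). intros p Q2 Hp.
    destruct (Rle_dec (hinner u v) p) as [|Hn]; [assumption|].
    exfalso. apply Rnot_le_lt in Hn.
    assert (p * p < hinner u v * hinner u v).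
    { apply Rle_lt_trans with (p * hinner u v). apply Rmult_le_compat_l; lra.
      apply Rmult_lt_compat_r; lra. }
    simpl in Q2. lra.
Qed.

Lemma vec_split (x d : X) s t :
  hadd x (hscal (s + t) d) = hadd (hadd x (hscal s d)) (hscal t d).
Proof. rewrite hscal_distr_r, hadd_assoc. reflexivity. Qed.

Lemma vec_sub (x h : X) : hsub (hadd x h) x = h.
Proof.
  unfold hsub. rewrite (hadd_comm _ x h), <- hadd_assoc, hadd_opp, hadd_0. reflexivity.
Qed.

Lemma hinner_sub_l (a b h : X) : hinner (hsub a b) h = hinner a h - hinner b h.
Proof. unfold hsub. rewrite hinner_add_l, hinner_opp_l. ring. Qed.

End H.

Lemma poly_deriv c e L s0 :
  derivable_pt_lim (fun s => s * c + L / 2 * s ^ 2 * e) s0 (c + L * s0 * e).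
Proof.
  replace (c + L * s0 * e) with (1 * c + (L/2 * (INR 2 * s0 ^ (2-1)) * e)).
  2:{ simpl. field. }
  apply (derivable_pt_lim_plus (fun s => s * c) (fun s => L/2 * s^2 * e)).
  - apply (derivable_pt_lim_scal_right (fun s => s)). apply derivable_pt_lim_id.
  - apply (derivable_pt_lim_scal_right (fun s => L/2 * s^2)).
    apply (derivable_pt_lim_scal (fun s => s^2)). apply derivable_pt_lim_pow.
Qed.

Section D.
Variable X : RealHilbert.
Variables (f : X -> R) (g : X -> X) (L : R).
Hypothesis Hf : frechet_grad f g.
Hypothesis HL : L > 0.
Hypothesis HA1 : forall y z : X, hnorm (hsub (g y) (g z)) <= L * hnorm (hsub y z).

Lemma F_deriv (x d : X) s0 : hinner d d <> 0 ->
  derivable_pt_lim (fun s => f (hadd x (hscal s d))) s0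
    (hinner (g (hadd x (hscal s0 d))) d).
Proof.
  intros Hdd eps Heps.
  assert (Hnd : 0 < hnorm d).
  { destruct (hnorm_nonneg _ d) as [|E]; auto. symmetry in E.
    apply hnorm_zero in E. subst. rewrite hinner_zero_r in Hdd. lra. }
  set (y := hadd x (hscal s0 d)).
  destruct (Hf y (eps / (2 * hnorm d))) as [dl [Hdl Hd]].
  { apply Rdiv_lt_0_compat; lra. }
  assert (Hpos : 0 < dl / hnorm d) by (apply Rdiv_lt_0_compat; lra).
  exists (mkposreal _ Hpos). simpl. intros h Hh0 Hhl.
  rewrite vec_split. fold y.
  specialize (Hd (hscal h d)). rewrite hnorm_scal, hinner_scal_r in Hd.
  assert (Ha : 0 < Rabs h) by (apply Rabs_pos_lt; auto).
  assert (Hb : Rabs h * hnorm d < dl).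
  { apply (Rmult_lt_compat_r (hnorm d)) in Hhl; auto. unfold Rdiv in Hhl. rewrite Rmult_assoc, Rinv_l in Hhl; lra. }
  assert (Hc : 0 < Rabs h * hnorm d) by (apply Rmult_lt_0_compat; lra).
  specialize (Hd (conj Hc Hb)).
  replace ((f (hadd y (hscal h d)) - f y) / h - hinner (g y) d)
    with ((f (hadd y (hscal h d)) - f y - h * hinner (g y) d) / h) by (field; auto).
  unfold Rdiv; rewrite Rabs_mult, Rabs_inv.
  apply (Rmult_lt_reg_r (Rabs h)); auto.
  unfold Rdiv. rewrite Rmult_assoc, Rinv_l by lra. rewrite Rmult_1_r.
  eapply Rle_lt_trans. apply Hd.
  replace (eps / (2 * hnorm d) * (Rabs h * hnorm d)) with (eps / 2 * Rabs h) by (field; lra).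
  nra.
Qed.

Lemma hscal_zero t : hscal t (@hzero X) = hzero.
Proof. rewrite <- (hscal0 _ hzero), hscal_assoc. replace (t * 0) with 0 by ring. reflexivity. Qed.

Lemma descent (x d : X) t : 0 <= t ->
  f (hadd x (hscal t d)) <= f x + t * hinner (g x) d + L / 2 * t ^ 2 * hinner d d.
Proof.
  intros Ht.
  destruct (Req_dec (hinner d d) 0) as [Hdd|Hdd].
  { apply hinner_def in Hdd. subst. rewrite hscal_zero, hadd_0, !hinner_zero_r. lra. }
  destruct Ht as [Ht|Ht].
  2:{ subst. rewrite hscal0, hadd_0. lra. }
  set (c := hinner (g x) d). set (e := hinner d d).
  destruct (MVT_cor2 (fun s => f (hadd x (hscal s d)) - (s * c + L / 2 * s ^ 2 * e))
              (fun s => hinner (g (hadd x (hscal s d))) d - (c + L * s * e)) 0 t Ht)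
    as [s [Hs1 Hs2]].
  { intros s _. apply (derivable_pt_lim_minus (fun s => f (hadd x (hscal s d)))
                  (fun s => s * c + L / 2 * s ^ 2 * e)).
    apply F_deriv; auto. apply poly_deriv. }
  simpl in Hs1. rewrite hscal0, hadd_0 in Hs1.
  assert (Hneg : hinner (g (hadd x (hscal s d))) d - (c + L * s * e) <= 0).
  { unfold c. cut (hinner (hsub (g (hadd x (hscal s d))) (g x)) d <= L * s * e). { rewrite hinner_sub_l. lra. }
    eapply Rle_trans. apply CS.
    pose proof (HA1 (hadd x (hscal s d)) x) as H1. rewrite vec_sub, hnorm_scal in H1.
    rewrite Rabs_right in H1 by lra.
    assert (e = hnorm d * hnorm d) by (unfold e; rewrite <- hnorm_sq; ring).
    pose proof (hnorm_nonneg _ d).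
    apply Rle_trans with (L * (s * hnorm d) * hnorm d).
    apply Rmult_le_compat_r; auto. nra. }
  nra.
Qed.

End D.

Fixpoint lst (P : nat -> bool) (N : nat) : list nat :=
  match N with
  | O => nil
  | S n => if P n then lst P n ++ (n :: nil) else lst P n
  end.

Lemma lst_in P N k : In k (lst P N) <-> (k < N)%nat /\ P k = true.
Proof.
  induction N; simpl.
  - split; [tauto| intros [H _]; lia].
  - destruct (P N) eqn:HP.
    + rewrite in_app_iff, IHN. simpl. split.
      * intros [[H1 H2]|[H|H]]; [split; auto; lia| subst; split; auto; lia| tauto].
      * intros [H1 H2]. destruct (Nat.eq_dec k N); [right; left; auto| left; split; auto; lia].
    + rewrite IHN. split; [intros [H1 H2]; split; auto; lia|].
      intros [H1 H2]. destruct (Nat.eq_dec k N); [subst; congruence| split; auto; lia].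
Qed.

Lemma lst_nodup P N : NoDup (lst P N).
Proof.
  induction N; simpl. constructor.
  destruct (P N) eqn:HP; auto.
  apply NoDup_app; auto. repeat constructor; simpl; tauto.
  intros a Ha Hb. simpl in Hb. destruct Hb as [Hb|Hb]; [|tauto]. subst.
  apply lst_in in Ha. lia.
Qed.

Lemma lst_len_S P N : length (lst P (S N)) = (length (lst P N) + if P N then 1 else 0)%nat.
Proof. simpl. destruct (P N); [rewrite length_app; simpl; lia| lia]. Qed.

Lemma lst_len_le P N : (length (lst P N) <= N)%nat.
Proof. induction N; [simpl; lia|]. rewrite lst_len_S. destruct (P N); lia. Qed.

Lemma lst_mono P N M : (N <= M)%nat -> (length (lst P N) <= length (lst P M))%nat.
Proof.
  induction 1; [lia|]. rewrite lst_len_S. destruct (P m); lia.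
Qed.

Theorem lemma3 (X : RealHilbert) (f : X -> R) (g : X -> X)
  (alpha0 beta rho L flow c1 c2 : R)
  (x : nat -> X) (alpha : nat -> R) (d : nat -> X)
  (nu : nat -> nat -> R) (lk : nat -> nat)
  (Hf : frechet_grad f g)
  (Halg : algorithm1 f g alpha0 beta rho x alpha d nu lk)
  (* A1 *)
  (HL : L > 0) (HA1 : forall y z : X, hnorm (hsub (g y) (g z)) <= L * hnorm (hsub y z))
  (* A2 *)
  (HA2 : forall y : X, f y >= flow)
  (* A3 *)
  (Hc1 : c1 > 0) (Hc2 : c2 > 0)
  (HA3a : forall k, hinner (g (x k)) (d k) <= - c1 * hnorm (g (x k)) ^ 2)
  (HA3b : forall k, hnorm (d k) <= c2 * hnorm (g (x k)))
  (* A4' with nu_k := nu_{k, l_k} *)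
  (HA4 : forall delta, delta > 0 -> exists n, forall k, (k >= n)%nat ->
           nu k (lk k) <= delta * hnorm (g (x k)) ^ 2)
  (* k1 = n_0(kappa_c / 2): the least n with the A4' property for delta = kappa_c/2 *)
  (k1 : nat)
  (Hk1 : forall k, (k >= k1)%nat ->
           nu k (lk k) <= kappa_c rho beta alpha0 c1 c2 L / 2 * hnorm (g (x k)) ^ 2)
  (Hk1min : forall n, (n < k1)%nat -> ~ (forall k, (k >= n)%nat ->
           nu k (lk k) <= kappa_c rho beta alpha0 c1 c2 L / 2 * hnorm (g (x k)) ^ 2)) :
  forall eps, eps > 0 ->
    exists Omega : list nat,
      NoDup Omega /\
      (forall k, In k Omega <-> hnorm (g (x k)) > eps) /\
      INR (length Omega) <=
        INR k1 + (2 * (f (x 0%nat) - flow + sum_lt (fun i => nu i (lk i)) k1)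
                   / kappa_c rho beta alpha0 c1 c2 L) * / eps ^ 2.
Proof.
  destruct Halg as [Ha0 [Hb [Hr [Hal0 [Hgd [Hnu [Htest [Hfail [Hx Halpha]]]]]]]]].
  set (m := 2 * (1 - rho) * c1 / (L * c2 ^ 2)).
  assert (Hm : 0 < m).
  { unfold m. apply Rdiv_lt_0_compat. nra. apply Rmult_lt_0_compat; [lra| apply pow_lt; lra]. }
  set (kap := kappa_c rho beta alpha0 c1 c2 L).
  assert (Hacc : forall k t nu0, 0 < t -> t <= m -> 0 <= nu0 ->
    f (hadd (x k) (hscal t (d k))) <= f (x k) + rho * t * hinner (g (x k)) (d k) + nu0).
  { intros k t nu0 Ht Htm Hn0.
    pose proof (descent X f g L Hf HA1 (x k) (d k) t (Rlt_le _ _ Ht)) as D.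
    set (G := hnorm (g (x k)) ^ 2) in *.
    set (gd := hinner (g (x k)) (d k)) in *.
    assert (Hdd : hinner (d k) (d k) <= c2 ^ 2 * G).
    { rewrite <- hnorm_sq. unfold G. rewrite <- Rpow_mult_distr.
      apply pow_incr. split; [apply hnorm_nonneg|apply HA3b]. }
    assert (HG : 0 <= G) by (unfold G; apply pow2_ge_0).
    assert (Htm2 : L * t * c2 ^ 2 <= 2 * (1 - rho) * c1).
    { unfold m in Htm. assert (0 < L * c2 ^ 2) by (apply Rmult_lt_0_compat; [lra|apply pow_lt; lra]).
      apply (Rmult_le_compat_r (L * c2 ^ 2)) in Htm; [|lra].
      unfold Rdiv in Htm. rewrite Rmult_assoc, Rinv_l in Htm by lra. lra. }
    assert (E1 : (1 - rho) * t * gd <= - (1 - rho) * t * c1 * G).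
    { specialize (HA3a k). fold G gd in HA3a.
      replace (- (1 - rho) * t * c1 * G) with ((1 - rho) * t * (- c1 * G)) by ring.
      apply Rmult_le_compat_l; [nra|lra]. }
    assert (E2 : L / 2 * t ^ 2 * hinner (d k) (d k) <= L / 2 * t ^ 2 * (c2 ^ 2 * G)).
    { apply Rmult_le_compat_l; [|lra]. apply Rmult_le_pos; [lra|apply pow2_ge_0]. }
    assert (E3 : t * G * (L * t * c2 ^ 2) <= t * G * (2 * (1 - rho) * c1)).
    { apply Rmult_le_compat_l; [nra|lra]. }
    nra. }
  set (mu := Rmin alpha0 m).
  assert (Hmu : 0 < mu) by (unfold mu; apply Rmin_glb_lt; lra).
  assert (Hal : forall k, mu <= alpha k).
  { induction k.
    - rewrite Hal0. apply Rmin_l.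
    - rewrite Halpha. destruct (lk k) as [|j] eqn:Hlk.
      + simpl. replace (alpha k * / (beta * 1)) with (alpha k / beta) by (field; lra).
        apply Rle_trans with (alpha k); auto.
        apply (Rmult_le_reg_r beta); [lra|]. unfold Rdiv. rewrite Rmult_assoc, Rinv_l by lra.
        assert (0 < alpha k) by lra. nra.
      + replace (Z.of_nat (S j) - 1)%Z with (Z.of_nat j) by lia.
        rewrite <- pow_powerRZ.
        destruct (Rle_dec (alpha k * beta ^ j) m) as [Hle|Hgt].
        * exfalso. apply (Hfail k j); [lia|]. unfold nm_test.
          replace (rho * alpha k * beta ^ j) with (rho * (alpha k * beta ^ j)) by ring.
          apply Hacc; auto.
          apply Rmult_lt_0_compat; [lra|apply pow_lt; lra].
        * apply Rnot_le_lt in Hgt. apply Rle_trans with m; [apply Rmin_r|lra]. }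
  assert (Esec : 2 * beta * rho * (1 - rho) * c1 ^ 2 / (L * c2 ^ 2) = rho * beta * c1 * m).
  { unfold m. field. repeat split; try apply pow_nonzero; lra. }
  assert (Hkap : kap <= rho * beta * c1 * mu).
  { unfold kap, kappa_c, mu, Rmin. rewrite Esec.
    destruct (Rle_dec alpha0 m);
    destruct (Rle_dec (rho * beta * alpha0 * c1) (rho * beta * c1 * m)); lra. }
  assert (Hkpos : 0 < kap).
  { unfold kap, kappa_c. apply Rmin_glb_lt.
    - repeat apply Rmult_lt_0_compat; lra.
    - apply Rdiv_lt_0_compat. apply Rmult_lt_0_compat. repeat apply Rmult_lt_0_compat; lra.
      apply pow_lt; lra. apply Rmult_lt_0_compat; [lra|apply pow_lt; lra]. }
  assert (Hdec : forall k, f (x (S k)) <= f (x k) - kap * hnorm (g (x k)) ^ 2 + nu k (lk k)).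
  { intro k. specialize (Htest k). unfold nm_test in Htest. rewrite <- Hx in Htest.
    assert (Ht : beta * mu <= alpha k * beta ^ lk k).
    { destruct (lk k) as [|j] eqn:Hlk.
      - simpl. specialize (Hal k). nra.
      - destruct (Rle_dec (alpha k * beta ^ j) m) as [Hle|Hgt].
        + exfalso. apply (Hfail k j); [lia|]. unfold nm_test.
          replace (rho * alpha k * beta ^ j) with (rho * (alpha k * beta ^ j)) by ring.
          apply Hacc; auto.
          apply Rmult_lt_0_compat; [pose proof (Hal k); lra|apply pow_lt; lra].
        + apply Rnot_le_lt in Hgt. rewrite <- tech_pow_Rmult.
          replace (alpha k * (beta * beta ^ j)) with (beta * (alpha k * beta ^ j)) by ring.
          apply Rmult_le_compat_l; [lra|]. apply Rle_trans with m; [apply Rmin_r|lra]. }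
    set (t := alpha k * beta ^ lk k) in *.
    replace (rho * alpha k * beta ^ lk k) with (rho * t) in Htest by (unfold t; ring).
    set (G := hnorm (g (x k)) ^ 2) in *.
    set (gd := hinner (g (x k)) (d k)) in *.
    assert (HG : 0 <= G) by (unfold G; apply pow2_ge_0).
    specialize (HA3a k). fold G gd in HA3a.
    assert (E1 : rho * t * gd <= rho * t * (- c1 * G)).
    { apply Rmult_le_compat_l; auto. apply Rmult_le_pos; [lra|]. pose proof (Hal k); nra. }
    assert (E2 : rho * (beta * mu) * (c1 * G) <= rho * t * (c1 * G)).
    { apply Rmult_le_compat_r; [nra|]. apply Rmult_le_compat_l; lra. }
    assert (E3 : kap * G <= rho * beta * c1 * mu * G) by (apply Rmult_le_compat_r; lra).
    nra. }
  intros eps Heps.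
  set (Pb := fun k => if Rgt_dec (hnorm (g (x k))) eps then true else false).
  assert (HPb : forall k, Pb k = true <-> hnorm (g (x k)) > eps).
  { intro k. unfold Pb. destruct (Rgt_dec (hnorm (g (x k))) eps); split; intro; auto; try congruence; tauto. }
  set (Ssum := sum_lt (fun i => nu i (lk i)) k1).
  set (C := f (x 0%nat) - flow + Ssum).
  assert (H0 : forall n, f (x n) <= f (x 0%nat) + sum_lt (fun i => nu i (lk i)) n).
  { induction n; simpl; [lra|]. pose proof (Hdec n).
    assert (0 <= kap * hnorm (g (x n)) ^ 2) by (apply Rmult_le_pos; [lra|apply pow2_ge_0]).
    lra. }
  set (len := fun N => INR (length (lst Pb N))).
  assert (H1 : forall n, f (x (k1 + n)%nat) + kap / 2 * eps ^ 2 * (len (k1 + n)%nat - len k1) <= f (x k1)).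
  { induction n.
    - rewrite Nat.add_0_r. lra.
    - rewrite Nat.add_succ_r. pose proof (Hdec (k1 + n)%nat) as Hd.
      pose proof (Hk1 (k1 + n)%nat ltac:(lia)) as Hn. fold kap in Hn.
      unfold len in *. rewrite lst_len_S.
      destruct (Pb (k1 + n)%nat) eqn:HP.
      + apply HPb in HP. rewrite plus_INR. simpl INR at 2.
        assert (eps ^ 2 < hnorm (g (x (k1 + n)%nat)) ^ 2).
        { pose proof (hnorm_nonneg _ (g (x (k1 + n)%nat))). simpl. nra. }
        assert (kap / 2 * eps ^ 2 <= kap / 2 * hnorm (g (x (k1 + n)%nat)) ^ 2).
        { apply Rmult_le_compat_l; lra. }
        lra.
      + rewrite Nat.add_0_r.
        assert (0 <= kap * hnorm (g (x (k1 + n)%nat)) ^ 2) by (apply Rmult_le_pos; [lra|apply pow2_ge_0]).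
        lra. }
  set (B := INR k1 + 2 * C / kap * / eps ^ 2).
  assert (Heps2 : 0 < eps ^ 2) by (apply pow_lt; lra).
  assert (Hbound : forall N, len N <= B).
  { intro N. apply Rle_trans with (len (k1 + N)%nat).
    { unfold len. apply le_INR, lst_mono. lia. }
    pose proof (H1 N) as HN. pose proof (H0 k1) as Hk. fold Ssum in Hk.
    pose proof (HA2 (x (k1 + N)%nat)).
    assert (Hl : len k1 <= INR k1) by (unfold len; apply le_INR, lst_len_le).
    assert (kap / 2 * eps ^ 2 * (len (k1 + N)%nat - len k1) <= C) by (unfold C; lra).
    unfold B.
    assert (len (k1 + N)%nat - len k1 <= 2 * C / kap * / eps ^ 2).
    { apply (Rmult_le_reg_l (kap / 2 * eps ^ 2)). apply Rmult_lt_0_compat; lra.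
      replace (kap / 2 * eps ^ 2 * (2 * C / kap * / eps ^ 2)) with C by (field; lra).
      lra. }
    lra. }
  assert (Hfin : exists N, forall k, (k >= N)%nat -> Pb k = false).
  { apply NNPP. intro Hn.
    assert (Hinf : forall N, exists k, (k >= N)%nat /\ Pb k = true).
    { intro N. apply NNPP. intro Hk. apply Hn. exists N. intros k Hk2.
      destruct (Pb k) eqn:E; auto. exfalso. apply Hk. exists k. auto. }
    assert (Hgrow : forall j, exists N, (j <= length (lst Pb N))%nat).
    { induction j. exists 0%nat. lia.
      destruct IHj as [N HN]. destruct (Hinf N) as [k [Hk1' Hk2]].
      exists (S k). rewrite lst_len_S, Hk2.
      pose proof (lst_mono Pb N k Hk1'). lia. }
    destruct (INR_unbounded B) as [j Hj]. destruct (Hgrow j) as [N HN].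
    apply le_INR in HN. pose proof (Hbound N). unfold len in *. lra. }
  destruct Hfin as [N HN].
  exists (lst Pb N). split; [apply lst_nodup|]. split.
  - intro k. rewrite lst_in, <- HPb. split; [tauto|].
    intro Hk. split; auto. destruct (Nat.lt_ge_cases k N); auto.
    rewrite HN in Hk by auto. congruence.
  - pose proof (Hbound N). unfold len, B, C, Ssum in *. fold kap. lra.
Qed.
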